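(* Let $\Gamma=\mathrm{Cay}(G,S)$ be a connected bipartite Cayley graph on a finite group $G$, and let $H$ be the part of this bipartite graph containing the identity $e$ (a normal subgroup of index $2$ in $G$, with $S\subseteq G\setminus H$). Let $G'=H\rtimes\langle c\rangle$ be some semidirect product of $H$ with a group $\langle c\rangle$ of order $2$ (so $c\notin H$, $c^2=e$). Fix $a\in G\setminus H$, let $T_a=Sa^{-1}\subseteq H$ and $S'=T_ac\subseteq G'$. If $S'=S'^{-1}$ in $G'$, then the Cayley graph $\mathrm{Cay}(G',S')$ is isomorphic to $\mathrm{Cay}(G,S)$.
   Context: For a finite group $G$ with identity $e$ and a subset $S\subseteq G\setminus\{e\}$ with $S=S^{-1}$, the Cayley graph $\mathrm{Cay}(G,S)$ has vertex set $G$, two vertices $a,b$ being adjacent iff $ab^{-1}\in S$. *)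

(* Defs.v *)
From mathcomp Require Import all_boot all_fingroup.
Set Implicit Arguments. Unset Strict Implicit. Unset Printing Implicit Defensive.
Local Open Scope group_scope.

Definition cay_rel (gT : finGroupType) (G S : {set gT}) : rel gT :=
  fun a b => [&& a \in G, b \in G & a * b^-1 \in S].

Definition is_cayley_set (gT : finGroupType) (G S : {set gT}) : Prop :=
  S \subset G :\ 1 /\ [set x^-1 | x in S] = S.

Definition graph_connected (gT : finType) (G : {set gT}) (e : rel gT) : Prop :=
  {in G &, forall a b, connect e a b}.

Definition bipartition (gT : finType) (G X : {set gT}) (e : rel gT) : Prop :=
  X \subset G /\ (forall a b, e a b -> (a \in X) != (b \in X)).

Definition cayley_isomorphic (gT gT' : finGroupType)
    (G S : {set gT}) (G' S' : {set gT'}) : Prop :=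
  exists f : gT -> gT',
    [/\ {in G &, injective f}, f @: G = G' &
        {in G &, forall a b, cay_rel G S a b = cay_rel G' S' (f a) (f b)}].

(* Main.v *)
Require Import Defs.
From mathcomp Require Import all_boot all_fingroup.
Local Open Scope group_scope.

Theorem lemma3p3 (gT gT' : finGroupType) (G H : {group gT}) (S : {set gT})
    (G' H' : {group gT'}) (c : gT') (f : {morphism H >-> gT'}) (a : gT) :
  is_cayley_set G S ->
  graph_connected G (cay_rel G S) ->
  bipartition G H (cay_rel G S) ->
  1 \in H ->
  isom H H' f ->
  H' ><| <[c]> = G' ->
  #[c] = 2 ->
  a \in G :\: H ->
  let Ta := [set s * a^-1 | s in S] in
  let S' := [set f t * c | t in Ta] in
  [set x^-1 | x in S'] = S' ->
  cayley_isomorphic G S G' S'.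
Proof.
move=> [SG Sinv] conn [HG bip] _ isoH sdp oc /setDP [aG aH] Ta S' S'inv.
have SG1 : forall s, s \in S -> s \in G.
  by move=> s /(subsetP SG); rewrite in_setD1 => /andP[].
have flip : forall s x, s \in S -> x \in G -> (s * x \in H) = (x \notin H).
  move=> s x sS xG; have := bip (s * x) x.
  rewrite /cay_rel xG (groupM (SG1 _ sS) xG) /= mulgK sS => /(_ isT).
  by case: (s * x \in H); case: (x \in H).
have invS : forall x, (x^-1 \in S) = (x \in S).
  move=> x; rewrite -{1}Sinv; apply/imsetP/idP => [[y yS /invg_inj ->]|xS] //.
  by exists x.
have key : forall u w, u \in G -> w \in G -> u \notin H -> w \notin H -> u * w^-1 \in H.
  move=> u w uG wG uH wH.
  have : connect (cay_rel G S) w u by apply: conn.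
  case/connectP=> p pth uE.
  suff P : forall x, x \in G -> (x * w^-1 \in H) = (x \notin H) ->
     path (cay_rel G S) x p -> (last x p * w^-1 \in H) = (last x p \notin H).
    have E := P w wG; rewrite mulgV group1 wH in E; have {}E := E erefl pth.
    by rewrite -uE uH in E; rewrite E.
  clear pth uE; elim: p => [|y p IH] x xG Px //= /andP[e pth].
  move: (e); rewrite /cay_rel => /and3P[_ yG xyS].
  apply: IH => //.
  have sS : (x * y^-1)^-1 \in S by rewrite invS.
  have ey : y = (x * y^-1)^-1 * x by rewrite invMg invgK mulgKV.
  move: sS; set s := (x * y^-1)^-1 => sS.
  rewrite ey -mulgA (flip _ (x * w^-1) sS (groupM xG (groupVr wG))).
  by rewrite (flip _ _ sS xG) Px.

have [nH'G' cG' defG' _ tiH'c] := sdprod_context sdp.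
have cinG' : c \in G' := subsetP cG' c (cycle_id c).
have H'G' : H' \subset G' := normal_sub nH'G'.
have cH' : c \notin H'.
  apply/negP => cH; have : c \in H' :&: <[c]> by rewrite inE cH cycle_id.
  by rewrite tiH'c inE => /eqP c1; move: oc; rewrite c1 order1.
have nc : forall x, x \in H' -> c^-1 * x * c \in H'.
  move=> x xH; rewrite -mulgA -conjgE.
  by rewrite (memJ_norm x (subsetP (normal_norm nH'G') c cinG')).
have cc : c * c = 1.
  by have := expg_order c; rewrite oc expgS expg1.
have cinv : c^-1 = c by rewrite -{1}(mulg1 c^-1) -cc mulKg.
have decomp : forall x, x \in G' -> x \in H' \/ x * c^-1 \in H'.
  move=> x; rewrite -defG' => /mulsgP[h y hH yc ->].
  case/cycleP: yc => i ->; rewrite -expg_mod_order oc.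
  have : (i %% 2 < 2)%N by rewrite ltn_pmod.
  case: (i %% 2)%N => [|[|//]] _.
    by left; rewrite expg0 mulg1.
  by right; rewrite expg1 mulgK.
have [injf imf] := isomP isoH.
have injf' := injmP injf.
have fH : forall x, x \in H -> f x \in H'.
  by move=> x xH; rewrite -imf mem_morphim.
have fpre : forall y, y \in H' -> exists2 k, k \in H & y = f k.
  by move=> y; rewrite -imf morphimEdom => /imsetP.
have TaE : forall x, (x \in Ta) = (x * a \in S).
  move=> x; apply/imsetP/idP => [[s sS ->]|xaS]; first by rewrite mulgKV.
  by exists (x * a); rewrite ?mulgK.
have SnotH : forall s, s \in S -> s \notin H.
  move=> s sS; have := flip s 1 sS (group1 G).
  by rewrite mulg1 group1 => ->.
have ua : forall u, u \in G -> u \notin H -> u * a^-1 \in H.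
  by move=> u uG uH; apply: key.
have TaH : forall x, x \in Ta -> x \in H.
  by move=> x /imsetP[s sS ->]; apply: ua; [apply: SG1 | apply: SnotH].
have conjH : forall k, k \in H -> a * k * a^-1 \in H.
  move=> k kH; have akG : a * k \in G by rewrite groupM // (subsetP HG).
  have akH : a * k \notin H.
    apply/negP => akH; move/negP: aH; apply.
    by rewrite -(mulgK k a) groupM ?groupV.
  exact: key akG aG akH aH.
have S'E : forall y, y \in H -> (f y * c \in S') = (y \in Ta).
  move=> y yH; apply/imsetP/idP => [[t tT /mulIg E]|yT]; last by exists y.
  by rewrite (injf' y t yH (TaH _ tT) E).
have notS : forall x, x \in H -> (x \in S) = false.
  by move=> x xH; apply/negP => /SnotH; rewrite xH.
have notS' : forall x, x \in H' -> (x \in S') = false.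
  move=> x xH; apply/negP => /imsetP[t tT E]; apply: (negP cH').
  have -> : c = (f t)^-1 * x by rewrite E mulKg.
  by rewrite groupM ?groupV ?fH ?TaH.
have invS' : forall x, (x^-1 \in S') = (x \in S').
  move=> x; rewrite -{1}S'inv; apply/imsetP/idP => [[y yS /invg_inj ->]|xS] //.
  by exists x.
have mixne : forall x y, x \in H' -> y \in H' -> x != y * c.
  move=> x y xH yH; apply/eqP => E; apply: (negP cH').
  have -> : c = y^-1 * x by rewrite E mulKg.
  by rewrite groupM ?groupV.
pose phi := fun x => if x \in H then c^-1 * f (a * x * a^-1) * c
                     else f (x * a^-1) * c.
have phiG : forall u, u \in G -> phi u \in G'.
  move=> u uG; rewrite /phi; case: ifP => uH.
    by apply: (subsetP H'G'); apply: nc; apply: fH; apply: conjH.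
  by rewrite groupM // (subsetP H'G') // fH // ua // uH.
have mix : forall u v, u \in G -> v \in G -> u \notin H -> v \in H ->
    (u * v^-1 \in S) = (phi u * (phi v)^-1 \in S').
  move=> u v uG vG uH vH; rewrite /phi (negPf uH) vH.
  have e : u * v^-1 * a^-1 = (u * a^-1) * (a * v * a^-1)^-1.
    by rewrite !invMg !invgK !mulgA mulgKV.
  have uvH : u * v^-1 * a^-1 \in H by rewrite e groupM ?groupV ?conjH ?ua.
  have -> : f (u * a^-1) * c * (c^-1 * f (a * v * a^-1) * c)^-1
            = f (u * v^-1 * a^-1) * c.
    rewrite e (morphM f (ua _ uG uH) (groupVr (conjH _ vH))) (morphV f (conjH _ vH)).
    by rewrite !invMg invgK !mulgA mulgK.
  by rewrite S'E // TaE mulgKV.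
exists phi; split.
- move=> u v uG vG; rewrite /phi; case: ifP => uH; case: ifP => vH.
  + move/mulIg/mulgI/(injf' _ _ (conjH _ uH) (conjH _ vH)).
    by move/mulIg/mulgI.
  + move=> E; have := mixne _ _ (nc _ (fH _ (conjH _ uH))) (fH _ (ua _ vG (negbT vH))).
    by rewrite E eqxx.
  + move=> E; have := mixne _ _ (nc _ (fH _ (conjH _ vH))) (fH _ (ua _ uG (negbT uH))).
    by rewrite -E eqxx.
  + by move/mulIg/(injf' _ _ (ua _ uG (negbT uH)) (ua _ vG (negbT vH)))/mulIg.
- apply/setP=> x; apply/imsetP/idP => [[u uG ->]|xG]; first exact: phiG.
  case: (decomp x xG) => xh.
    have hx : c * x * c^-1 \in H' by rewrite -{1}cinv {2}cinv; apply: nc.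
    have [k kH ek] := fpre _ hx.
    have aH' : a^-1 \notin H by rewrite groupV.
    have uH : a^-1 * k * a \in H.
      have akG : a^-1 * k \in G by rewrite groupM ?groupV // (subsetP HG).
      have akH : a^-1 * k \notin H by rewrite (groupMr _ kH).
      by rewrite -{2}(invgK a); apply: key; rewrite ?groupV.
    exists (a^-1 * k * a); first by rewrite (subsetP HG).
    rewrite /phi uH !mulgA mulgV mul1g mulgK -ek.
    by rewrite !mulgA mulVg mul1g mulgKV.
  have [k kH ek] := fpre _ xh.
  have kaH : k * a \notin H by rewrite (groupMl _ kH).
  exists (k * a); first by rewrite groupM // (subsetP HG).
  by rewrite /phi (negPf kaH) mulgK -ek mulgKV.
- move=> u v uG vG; rewrite /cay_rel uG vG !phiG //=.
  case uH: (u \in H); case vH: (v \in H).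
  + rewrite notS ?groupM ?groupV // notS' // groupM ?groupV //.
      by rewrite /phi uH; apply: nc; apply: fH; apply: conjH.
    by rewrite /phi vH; apply: nc; apply: fH; apply: conjH.
  + rewrite -invS -invS' !invMg !invgK; apply: mix => //; by rewrite vH.
  + by apply: mix => //; rewrite uH.
  + rewrite notS ?key ?uH ?vH // notS' //.
    rewrite /phi uH vH invMg !mulgA mulgK groupM ?groupV ?fH ?ua ?uH ?vH //.
Qed.
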